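(* If $q$ is an integer with $q\equiv 1\pmod 4$ and $q\neq 1$, then $A_q(q+3,q+1)\le \tfrac12 q^2(q+1)-q=\tfrac12(q-1)q(q+2)$.
   Context: For an integer $q\ge2$ let $[q]=\{0,1,\dots,q-1\}$. For words $u,v\in[q]^n$, the Hamming distance $d_H(u,v)$ is the number of coordinates $i$ with $u_i\neq v_i$. The minimum distance of a code $C\subseteq[q]^n$ is the minimum Hamming distance between distinct codewords ($\infty$ if $|C|\le 1$). $A_q(n,d)$ is the maximum cardinality of a code $C\subseteq[q]^n$ with minimum distance at least $d$. *)

(* Defs.v *)
From mathcomp Require Import all_boot.
Set Implicit Arguments. Unset Strict Implicit. Unset Printing Implicit Defensive.

Definition word (q n : nat) := {ffun 'I_n -> 'I_q}.

Definition dH (q n : nat) (u v : word q n) : nat := #|[set i | u i != v i]|.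

(* C has minimum distance at least d (vacuous when |C| <= 1, i.e. min distance = oo). *)
Definition min_dist_ge (q n d : nat) (C : {set word q n}) : bool :=
  [forall u in C, forall v in C, (u != v) ==> (d <= dH u v)].

Definition Aq (q n d : nat) : nat :=
  \max_(C : {set word q n} | min_dist_ge d C) #|C|.

(* Main.v *)
Require Import Defs.
From mathcomp Require Import all_boot zify.
Set Implicit Arguments. Unset Strict Implicit. Unset Printing Implicit Defensive.

Section S.
Variables (q n : nat).
Implicit Types (u v x y : word q n) (D : {set word q n}).

Definition agr u v : nat := \sum_(k < n) (u k == v k).

Lemma card_setP (T : finType) (P : pred T) : #|[set i | P i]| = \sum_i (P i : nat).
Proof. by rewrite -sum1dep_card big_mkcond /=; apply: eq_bigr => i _; case: (P i). Qed.

Lemma dH_agr u v : dH u v + agr u v = n.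
Proof.
rewrite /dH card_setP /agr -big_split /=.
rewrite (eq_bigr (fun _ => 1)) ?sum1_card ?card_ord // => i _; by case: (u i == v i).
Qed.

Lemma agr_refl u : agr u u = n.
Proof. by rewrite /agr (eq_bigr (fun _ => 1)) ?sum1_card ?card_ord // => i _; rewrite eqxx. Qed.

Definition m D (k : 'I_n) (c : 'I_q) : nat := \sum_(x in D) (x k == c).


Lemma sum_eq1 (a : 'I_q) : \sum_(c : 'I_q) ((a == c) : nat) = 1.
Proof.
rewrite (bigD1 a) //= eqxx big1 // => c; rewrite eq_sym => /negbTE -> //.
Qed.

Lemma sum_m D k : \sum_c m D k c = #|D|.
Proof.
rewrite /m exchange_big /= -sum1_card; apply: eq_bigr => x _; exact: sum_eq1.
Qed.

Lemma sum_agr D : \sum_(x in D) \sum_(y in D) agr x y = \sum_k \sum_c (m D k c) ^ 2.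
Proof.
rewrite /agr.
under eq_bigr => x _ do rewrite exchange_big /=.
rewrite exchange_big /=; apply: eq_bigr => k _.
have E : forall x y : word q n, ((x k == y k) : nat) = \sum_c ((x k == c) * (y k == c)).
  move=> x y; rewrite (bigD1 (x k)) //= eqxx mul1n big1 ?addn0 ?(eq_sym (y k)) // => c.
  by rewrite eq_sym => /negbTE ->.
under eq_bigr => x _ do under eq_bigr => y _ do rewrite E.
under eq_bigr => x _ do rewrite exchange_big /=.
rewrite exchange_big /=; apply: eq_bigr => c _.
rewrite /m expnS expn1 big_distrl /=; apply: eq_bigr => x _.
by rewrite big_distrr.
Qed.


Definition Q D := \sum_(x in D) \sum_(y in D) ((agr x y == 1) : nat).

Lemma agr_ge1 u v j : u j = v j -> 1 <= agr u v.
Proof. by move=> e; rewrite /agr (bigD1 j) //= e eqxx. Qed.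

Lemma class_eq D j b : 1 < n -> (forall x, x \in D -> x j = b) ->
  (forall x y, x \in D -> y \in D -> x != y -> agr x y <= 2) ->
  \sum_(x in D) \sum_(y in D) agr x y + Q D = #|D| * (n + 2 * #|D|.-1).
Proof.
move=> n1 Hj H2; rewrite /Q -big_split /= -sum_nat_const; apply: eq_bigr => x xD.
rewrite -big_split /= (bigD1 x) //= agr_refl.
have -> : (n == 1) = false by apply/negbTE; rewrite neq_ltn n1 orbT.
rewrite addn0; congr (_ + _).
rewrite (eq_bigr (fun _ => 2)); last first.
  move=> y /andP [yD yx].
  have h1 := agr_ge1 (j := j) (u := x) (v := y); rewrite Hj // Hj // in h1.
  have h2 := H2 x y xD yD; rewrite eq_sym yx in h2.
  have : 1 <= agr x y <= 2 by rewrite h1 ?h2.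
  by case: (agr x y) => [|[|[|]]].
rewrite (eq_bigl (mem (D :\ x))) => [|y]; last by rewrite !inE andbC.
rewrite sum_nat_const (cardsD1 x D) xD /=.
by rewrite mulnC.
Qed.

Lemma m_fixed D j b : (forall x, x \in D -> x j = b) -> \sum_c (m D j c) ^ 2 = #|D| ^ 2.
Proof.
move=> Hj; rewrite (bigD1 b) //= big1 ?addn0.
  congr (_ ^ 2); rewrite /m -sum1_card; apply: eq_bigr => x xD; by rewrite Hj // eqxx.
move=> c cb; rewrite /m big1 // => x xD; by rewrite Hj // eq_sym (negbTE cb).
Qed.

Lemma sum_neq_const (j : 'I_n) c : \sum_(k | k != j) c = n.-1 * c.
Proof.
have := sum_nat_const (mem 'I_n) c; rewrite (bigD1 j) //= card_ord.
case: n j => [[]//|n'] j /=; rewrite mulSn => /eqP; rewrite eqn_add2l => /eqP.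
by [].
Qed.

Lemma card_class D k c : #|[set x in D | x k == c]| = m D k c.
Proof.
rewrite card_setP /m [RHS]big_mkcond /=; apply: eq_bigr => x _.
by case: (x \in D).
Qed.

Lemma sum_class D k c (F : word q n -> nat) :
  \sum_(x in [set x in D | x k == c]) F x = \sum_(x in D) (x k == c) * F x.
Proof.
rewrite big_mkcond [RHS]big_mkcond /=; apply: eq_bigr => x _.
rewrite inE; case: (x \in D); case: (x k == c) => //=; by rewrite ?mul1n ?mul0n.
Qed.

Lemma agrC u v : agr u v = agr v u.
Proof. by apply: eq_bigr => i _; rewrite eq_sym. Qed.

Lemma sum_agr1 D y : \sum_(x in D) agr x y = \sum_k m D k (y k).
Proof. by rewrite /agr exchange_big. Qed.

Lemma class_fixed D j b (x : word q n) : x \in [set y in D | y j == b] -> x j = b.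
Proof. by rewrite inE => /andP [_ /eqP]. Qed.

End S.

Lemma cs_seq (T : Type) (r : seq T) (f : T -> nat) :
  (\sum_(i <- r) f i) ^ 2 <= (\sum_(i <- r) 1) * \sum_(i <- r) f i ^ 2.
Proof.
elim: r => [|a r IH]; first by rewrite !big_nil.
rewrite !big_cons.
move: IH; set S := \sum_(i <- r) f i; set k := \sum_(i <- r) 1; set U := \sum_(i <- r) f i ^ 2.
move=> IH.
have H : 2 * k * f a * S <= k * k * f a ^ 2 + S ^ 2.
  have : 0 <= (k * f a - S) ^ 2 + (S - k * f a) ^ 2 by [].
  nia.
nia.
Qed.

Lemma cs_ord q (f : 'I_q -> nat) : (\sum_c f c) ^ 2 <= q * \sum_c f c ^ 2.
Proof. by have := cs_seq (index_enum 'I_q) f; rewrite sum1_card card_ord. Qed.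

Lemma tangent q h (f : 'I_q -> nat) : q = (2 * h).-1 -> q * \sum_c f c <= \sum_c f c ^ 2 + q * (h * h.-1).
Proof.
move=> qh.
have -> : q * (h * h.-1) = \sum_(c : 'I_q) (h * h.-1) by rewrite sum_nat_const card_ord.
rewrite big_distrr -big_split /=.
apply: leq_sum => c _.
have : 0 <= (f c - h) * (f c - h.-1) + (h - f c) * (h.-1 - f c) by [].
case: h qh => [|h] ->. by rewrite muln0 mul0n.
simpl. nia.
Qed.

Lemma A1 t s X Qd : s ^ 2 + X + Qd = s * ((4*t+1) + 3 + 2 * s.-1) ->
  (4*t+3) * s ^ 2 <= (4*t+1) * X -> s <= (4*t+1)*(2*t+1).
Proof.
move=> e h.
have e2 : X + Qd = s * s + (4*t+2) * s by case: s e {h} => [|s] /=; nia.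
have h2 : 2 * s * s <= 2 * ((4*t+1)*(2*t+1)) * s by nia.
case: s {e h e2} h2 => // s; rewrite leq_pmul2r //; lia.
Qed.
Lemma A2 t s X Qd : s ^ 2 + X + Qd = s * ((4*t+1) + 3 + 2 * s.-1) ->
  (4*t+3) * ((4*t+1) * s) <= X + (4*t+3) * ((4*t+1) * ((2*t+1) * (2*t))) ->
  s <= (4*t+1)*(2*t+1) ->
  Qd <= ((4*t+1)*(2*t+1) - s) * ((4*t+1)*(2*t+1) - s).-1.
Proof.
move=> e h hs.
have e2 : X + Qd = s * s + (4*t+2) * s by case: s e {h hs} => [|s] /=; nia.
have [d ed] : exists d, d + s = (4*t+1)*(2*t+1) by exists ((4*t+1)*(2*t+1) - s); rewrite subnK.
have -> : (4*t+1)*(2*t+1) - s = d by lia.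
case: d ed => [|d] /= ed; nia.
Qed.

Lemma A3 t s X Qd E : s = (4*t+1)*(2*t+1) -> s ^ 2 + X + Qd = s * ((4*t+1) + 3 + 2 * s.-1) ->
  E + (4*t+3) * (2 * (2*t+1) * s) = X + (4*t+3) * ((4*t+1) * (2*t+1) ^ 2) -> E = 0.
Proof.
move=> -> e1 e2.
have e3 : X + Qd = (4*t+1)*(2*t+1) * ((4*t+1)*(2*t+1)) + (4*t+2) * ((4*t+1)*(2*t+1)).
  by move: e1; rewrite addn1 /= -addnA; nia.
nia.
Qed.
Lemma A4 t M r : 1 <= t -> r + M = (4*t+1) * ((4*t+1)*(2*t+1)) ->
  (4*t+1) * ((4*t+1)*(2*t+1)) - (4*t+1) < M ->
  2 * (M - (4*t+1)*(2*t+1)) <= (4*t+1+3) * (r * r.-1) -> False.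
Proof.
move=> t1 e h1 h2.
have hr : r <= 4 * t by lia.
have h3 : r * r.-1 <= r * (4*t).-1 by apply: leq_mul => //; lia.
have h4 : (4*t+1+3) * (r * r.-1) <= (4*t+4) * (4*t) * (4*t).-1.
  rewrite (_ : 4*t+1+3 = 4*t+4); last by lia.
  rewrite -mulnA; apply: leq_mul => //; apply: leq_trans h3 _; exact: leq_mul.
have h5 : 2 * (4 * t * ((4*t+1)*(2*t+1)) - 4 * t) <= 2 * (M - (4*t+1)*(2*t+1)) by nia.
have h6 := leq_trans h5 (leq_trans h2 h4).
case: t t1 h6 {e h1 h2 hr h3 h4 h5} => // t _; rewrite /=. nia.
Qed.


Section M.
Variable t : nat.
Local Notation q := (4*t+1).
Local Notation n := (4*t+1+3).
Local Notation K := ((4*t+1)*(2*t+1)).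
Variable C : {set word q n}.
Hypothesis mdC : forall x y, x \in C -> y \in C -> x != y -> agr x y <= 2.

Definition cls j b := [set x in C | x j == b].

Lemma cls_sub j b : cls j b \subset C.
Proof. by apply/subsetP => x; rewrite inE => /andP []. Qed.

Lemma class_facts j b :
  let s := #|cls j b| in let X := \sum_(k | k != j) \sum_c (m (cls j b) k c) ^ 2 in
  [/\ s ^ 2 + X + Q (cls j b) = s * (q + 3 + 2 * s.-1),
      (4*t+3) * s ^ 2 <= q * X
    & (4*t+3) * (q * s) <= X + (4*t+3) * (q * ((2*t+1) * (2*t)))].
Proof.
move=> s X; split.
- have n1 : 1 < n by lia.
  have Hj : forall x, x \in cls j b -> x j = b by move=> x; exact: class_fixed.
  have H2 : forall x y, x \in cls j b -> y \in cls j b -> x != y -> agr x y <= 2.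
    by move=> x y /(subsetP (cls_sub j b)) xC /(subsetP (cls_sub j b)) yC; exact: mdC.
  have := class_eq n1 Hj H2.
  rewrite sum_agr (bigD1 j) //= (m_fixed Hj).
  by [].
- have -> : (4*t+3) * s ^ 2 = \sum_(k | k != j) s ^ 2 by rewrite sum_neq_const; congr (_ * _); lia.
  rewrite /X big_distrr /=; apply: leq_sum => k _.
  by have := cs_ord (m (cls j b) k); rewrite sum_m.
- have -> : (4*t+3) * (q * s) = \sum_(k | k != j) (q * s) by rewrite sum_neq_const; congr (_ * _); lia.
  have -> : (4*t+3) * (q * ((2*t+1) * (2*t))) = \sum_(k | k != j) (q * ((2*t+1) * (2*t))) by rewrite sum_neq_const; congr (_ * _); lia.
  rewrite /X -big_split /=; apply: leq_sum => k _.
  have qh : q = (2 * (2*t+1)).-1 by lia.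
  have T := tangent (m (cls j b) k) qh.
  rewrite sum_m (_ : (2*t+1).-1 = 2*t) in T; [exact: T | lia].
Qed.

Lemma class_bound j b : #|cls j b| <= K /\
   Q (cls j b) <= (K - #|cls j b|) * (K - #|cls j b|).-1.
Proof.
have [e1 e2 e3] := class_facts j b.
have h := A1 e1 e2; split => //; exact: A2 e1 e3 h.
Qed.

Lemma tight j b : #|cls j b| = K -> forall k, k != j -> forall c, m (cls j b) k c = 2*t+1.
Proof.
move=> sK.
have [e1 _ _] := class_facts j b.
set D := cls j b in e1 sK *.
set h := 2*t+1.
pose e k := \sum_c ((m D k c - h) ^ 2 + (h - m D k c) ^ 2).
have ek : forall k, e k + 2 * h * #|D| = \sum_c (m D k c) ^ 2 + q * h ^ 2.
  move=> k; rewrite /e -(sum_m D k) big_distrr /=.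
  have -> : q * h ^ 2 = \sum_(c : 'I_q) h ^ 2 by rewrite sum_nat_const card_ord.
  rewrite -!big_split /=; apply: eq_bigr => c _.
  case: (leqP (m D k c) h) => hc.
    have -> : m D k c - h = 0 by lia.
    nia.
  have -> : h - m D k c = 0 by lia.
  nia.
have eE : \sum_(k | k != j) e k + (4*t+3) * (2 * h * #|D|) =
      \sum_(k | k != j) \sum_c (m D k c) ^ 2 + (4*t+3) * (q * h ^ 2).
  rewrite (_ : 4*t+3 = n.-1); last by lia.
  rewrite -!(sum_neq_const j) -!big_split /=; apply: eq_bigr => k _; exact: ek.
have E0 := A3 sK e1 eE.
move=> k kj c.
move/eqP: E0; rewrite sum_nat_eq0 => /forallP /(_ k); rewrite kj /= /e.
rewrite sum_nat_eq0 => /forallP /(_ c) /=.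
rewrite addn_eq0 !expn_eq0 !subn_eq0 /= !andbT => /andP [h1 h2]; apply/eqP.
by rewrite eqn_leq h1 h2.
Qed.


Lemma sum_cls k : \sum_c #|cls k c| = #|C|.
Proof. rewrite -(sum_m C k); apply: eq_bigr => c _; exact: card_class. Qed.

Lemma S1_eq : \sum_(x in C) \sum_(y in C) ((agr x y == 1) : nat) =
  \sum_k \sum_c Q (cls k c).
Proof.
have E1 : forall x y : word q n, ((agr x y == 1) : nat) =
    \sum_k \sum_c ((x k == c) * ((y k == c) * (agr x y == 1))).
  move=> x y.
  have E : ((agr x y == 1) : nat) = agr x y * (agr x y == 1) by case: (agr x y == 1) /eqP => [->|_]; rewrite ?muln0.
  set F := ((agr x y == 1) : nat) in E *.
  rewrite {1}E {1}/agr big_distrl /=; apply: eq_bigr => k _.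
  rewrite (bigD1 (x k)) //= eqxx mul1n big1 ?addn0 ?(eq_sym (y k)) // => c.
  by rewrite eq_sym => /negbTE ->.
under eq_bigr => x _ do under eq_bigr => y _ do rewrite E1.
under eq_bigr => x _ do rewrite exchange_big /=.
rewrite exchange_big /=; apply: eq_bigr => k _.
under eq_bigr => x _ do rewrite exchange_big /=.
rewrite exchange_big /=; apply: eq_bigr => c _.
rewrite /Q /cls sum_class; apply: eq_bigr => x _.
by rewrite sum_class big_distrr.
Qed.


Lemma main_bound : 1 <= t -> #|C| <= q * K - q.
Proof.
move=> t1.
have j0 : 'I_n by apply: (@Ordinal _ 0); lia.
case: (leqP #|C| (q * K - q)) => // hM.
have sK : forall k c, #|cls k c| <= K by move=> k c; case: (class_bound k c).
have eqr : forall k, \sum_c (K - #|cls k c|) + #|C| = q * K.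
  move=> k; rewrite -(sum_cls k) -big_split /=.
  have -> : q * K = \sum_(c : 'I_q) K by rewrite sum_nat_const card_ord.
  apply: eq_bigr => c _; exact: subnK.
have [a ha] : exists a, #|cls j0 a| = K.
  case: (pickP (fun a => #|cls j0 a| == K)) => [a /eqP ha|none]; first by exists a.
  exfalso.
  have : #|C| <= q * K.-1.
    have -> : q * K.-1 = \sum_(c : 'I_q) K.-1 by rewrite sum_nat_const card_ord.
    rewrite -(sum_cls j0); apply: leq_sum => c _.
    have := sK j0 c; have := none c; move=> /negbT; lia.
  move: hM; rewrite -subn1 mulnBr muln1; lia.
set T := cls j0 a.
have tT := tight ha.
have TC : T \subset C := cls_sub j0 a.
have wit : forall y, y \in C :\: T -> exists2 x, x \in T & agr x y = 1.
  move=> y; rewrite inE => /andP [yT yC].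
  have ya : y j0 != a by apply: contraNneq yT => e; rewrite inE yC e eqxx.
  have sumE : \sum_(x in T) agr x y = (4*t+3) * (2*t+1).
    rewrite sum_agr1 (bigD1 j0) //=.
    have -> : m T j0 (y j0) = 0.
      by rewrite /m big1 // => x xT; rewrite (class_fixed xT) eq_sym (negbTE ya).
    rewrite (eq_bigr (fun _ => 2*t+1)); last by move=> k kj; exact: tT.
    rewrite sum_neq_const add0n; congr (_ * _); lia.
  case: (pickP (fun x => (x \in T) && (agr x y == 1))) => [x /andP [xT /eqP e]|none].
    by exists x.
  exfalso.
  have : ~~ odd (\sum_(x in T) agr x y).
    apply: (big_ind (fun v => ~~ odd v)) => //.
      by move=> u v; rewrite oddD; case: (odd u); case: (odd v).
    move=> x xT; have := none x; rewrite xT /= => /negbT ne1.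
    have xy : x != y by apply: contraNneq yT => <-.
    have := mdC (subsetP TC x xT) yC xy.
    by case: (agr x y) ne1 => [|[|[|]]].
  rewrite sumE.
  have -> : (4*t+3)*(2*t+1) = (4*t*t + 5*t + 1).*2 + 1 by rewrite -muln2; nia.
  by rewrite oddD odd_double.
set S1 := \sum_(x in C) \sum_(y in C) ((agr x y == 1) : nat).
have CT : C :&: T = T by apply/setIidPr.
have cD : #|C :\: T| = #|C| - K by rewrite cardsD CT ha.
have L1 : #|C :\: T| <= \sum_(x in C :\: T) \sum_(y in C) ((agr x y == 1) : nat).
  rewrite -sum1_card; apply: leq_sum => x xD.
  have [x' x'T e] := wit x xD.
  by rewrite (bigD1 x') ?(subsetP TC) //= agrC e eqxx leq_addr.
have L2 : #|C :\: T| <= \sum_(x in T) \sum_(y in C) ((agr x y == 1) : nat).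
  apply: leq_trans (_ : _ <= \sum_(x in T) \sum_(y in C :\: T) ((agr x y == 1) : nat)) _.
    rewrite exchange_big /= -sum1_card; apply: leq_sum => y yD.
    have [x xT e] := wit y yD.
    by rewrite (bigD1 x) //= e eqxx leq_addr.
  apply: leq_sum => x _; rewrite [X in _ <= X](big_setID T) /=; exact: leq_addl.
have S1E : S1 = \sum_(x in T) \sum_(y in C) ((agr x y == 1) : nat) +
                \sum_(x in C :\: T) \sum_(y in C) ((agr x y == 1) : nat).
  by rewrite /S1 (big_setID T) CT.
set r := q * K - #|C|.
have Qk : forall k, \sum_c Q (cls k c) <= r * r.-1.
  move=> k.
  have dsum : \sum_c (K - #|cls k c|) = r by have := eqr k; rewrite /r; lia.
  apply: leq_trans (_ : _ <= \sum_c (K - #|cls k c|) * r.-1) _; last first.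
    by rewrite -big_distrl /= dsum.
  apply: leq_sum => c _; have [_ hQ] := class_bound k c.
  apply: leq_trans hQ _.
  have hd : K - #|cls k c| <= r by rewrite -dsum (bigD1 c) //= leq_addr.
  apply: leq_mul => //; lia.
have U : S1 <= n * (r * r.-1).
  have -> : n * (r * r.-1) = \sum_(k : 'I_n) (r * r.-1) by rewrite sum_nat_const card_ord.
  rewrite /S1 S1_eq; apply: leq_sum => k _; exact: Qk.
exfalso; apply: (A4 t1 (_ : r + #|C| = _) hM).
  by have := eqr j0; rewrite /r; lia.
apply: leq_trans U; lia.
Qed.

End M.


Theorem corollary5p4 (q : nat) :
  q %% 4 = 1 -> q != 1 ->
  Aq q (q + 3) (q + 1) <= (q ^ 2 * (q + 1)) %/ 2 - q.
Proof.
move=> q4 q1.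
have [t et] : exists t, q = 4*t+1.
  by exists (q %/ 4); rewrite {1}(divn_eq q 4) q4; lia.
subst q.
have t1 : 1 <= t by move: q1 {q4}; case: t.
have -> : (4*t+1) ^ 2 * (4*t+1+1) = ((4*t+1)*((4*t+1)*(2*t+1))) * 2 by nia.
rewrite mulnK //.
rewrite /Aq; apply/bigmax_leqP => C hC.
apply: main_bound => // x y xC yC xy.
move/forall_inP: hC => /(_ x xC) /forall_inP /(_ y yC) /implyP /(_ xy) hd.
have := dH_agr x y; lia.
Qed.
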